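(* Let $(\mathfrak g,\theta,d)$ be a hermitian Lie algebra with $\mathfrak g=\mathfrak k\oplus\mathfrak p$ such that $\mathfrak k/\mathfrak z(\mathfrak k)$ has no open invariant cones. Then every non-empty open invariant convex cone $W\subseteq\mathfrak g$ intersects $\mathfrak z(\mathfrak k)$.
   Context: Hermitian Lie algebra: $\mathfrak g$ a real Banach–Lie algebra, $\theta$ a continuous involutive automorphism with eigenspaces $\mathfrak k=\ker(\theta-\mathbf1)$, $\mathfrak p=\ker(\theta+\mathbf 1)$, $d\in\mathfrak z(\mathfrak k)$, such that $\mathfrak p$ is a complex Hilbert space, $\mathrm{ad}\,x|_\mathfrak p$ ($x\in\mathfrak k$) is bounded skew-hermitian, $[d,x]=ix$ for $x\in\mathfrak p$, and $\{x\in\mathfrak k:[x,\mathfrak p]=0\}\subseteq\mathfrak z(\mathfrak k)$. An open invariant cone in a Banach–Lie algebra $\mathfrak l$ is an open convex cone ($W+W\subseteq W$, $tW\subseteq W$ for $t>0$) invariant under all $e^{\mathrm{ad}\,x}$, $x\in\mathfrak l$; $\mathfrak l$ has no open invariant cones if each non-empty such cone equals $\mathfrak l$. *)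

(* Defs.v *)
From mathcomp Require Import all_boot all_order all_algebra.
From mathcomp Require Import all_classical all_reals all_analysis.
From mathcomp.real_closed Require Export complex.
Export numFieldNormedType.Exports.

Set Implicit Arguments.
Unset Strict Implicit.
Unset Printing Implicit Defensive.
Import Order.TTheory GRing.Theory Num.Theory.
Local Open Scope ring_scope.
Local Open Scope classical_set_scope.
Local Open Scope complex_scope.

Section Defs.
Variables (R : realType) (g : completeNormedModType R).

Definition banach_lie (br : g -> g -> g) : Prop :=
  [/\ (forall (a : R) x y z, br (a *: x + y) z = a *: br x z + br y z),
      (forall x y, br x y = - br y x),
      (forall x y z, br x (br y z) + br y (br z x) + br z (br x y) = 0)
    & continuous (fun xy : g * g => br xy.1 xy.2)].

Definition cont_inv_aut (br : g -> g -> g) (theta : g -> g) : Prop :=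
  [/\ (forall (a : R) x y, theta (a *: x + y) = a *: theta x + theta y),
      continuous theta,
      (forall x, theta (theta x) = x)
    & (forall x y, theta (br x y) = br (theta x) (theta y))].

Definition kpart (theta : g -> g) : set g := [set x | theta x = x].
Definition ppart (theta : g -> g) : set g := [set x | theta x = - x].

Definition lie_center (br : g -> g -> g) (L : set g) : set g :=
  [set z | L z /\ forall x, L x -> br z x = 0].

Definition expad (br : g -> g -> g) (x y : g) : g :=
  limn (series (fun n => (n`!%:R)^-1 *: iter n (br x) y)).

(** [p = ppart theta] is a complex Hilbert space whose complex structure is
    [i . u := [d, u]] (this encodes the axiom [[d,x] = i x] for x in p),
    with complex inner product [ip] (linear in the first argument), whose
    norm is equivalent to the Banach norm of g on p; and for x in k,
    ad x |_p is skew-hermitian. *)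
Definition hermitian_lie_alg (br : g -> g -> g) (theta : g -> g) (d : g)
  (ip : g -> g -> R[i]) : Prop :=
  [/\ banach_lie br /\ cont_inv_aut br theta,
      lie_center br (kpart theta) d,
      [/\ (forall u v w, ppart theta u -> ppart theta v -> ppart theta w ->
             ip (u + v) w = ip u w + ip v w),
          (forall (a : R) u w, ppart theta u -> ppart theta w ->
             ip (a *: u) w = a%:C * ip u w),
          (forall u w, ppart theta u -> ppart theta w ->
             ip (br d u) w = 'i * ip u w),
          (forall u w, ppart theta u -> ppart theta w -> ip w u = (ip u w)^*)
        & exists c c' : R, [/\ 0 < c, 0 < c' & forall u, ppart theta u ->
             ((c * `|u| ^+ 2)%:C <= ip u u) /\ (ip u u <= (c' * `|u| ^+ 2)%:C)]],
      (forall x u w, kpart theta x -> ppart theta u -> ppart theta w ->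
          ip (br x u) w = - ip u (br x w))
    & (forall x, kpart theta x -> (forall u, ppart theta u -> br x u = 0) ->
          lie_center br (kpart theta) x)].

Definition open_inv_cone (br : g -> g -> g) (L W : set g) : Prop :=
  [/\ W `<=` L,
      (exists U : set g, open U /\ W = U `&` L),
      (forall x y, W x -> W y -> W (x + y)),
      (forall (t : R) x, 0 < t -> W x -> W (t *: x))
    & (forall x y, L x -> W y -> W (expad br x y))].

Definition open_inv_cone_g (br : g -> g -> g) (W : set g) : Prop :=
  open_inv_cone br setT W.

(** A subset of the quotient
    k/z(k) is identified with its (z(k)-saturated) preimage in k under the
    quotient map q; q^{-1} is a bijection between subsets of k/z(k) and
    z(k)-saturated subsets of k, and C is open / a convex cone /
    e^{ad q(x)}-invariant / equal to k/z(k) iff q^{-1}(C) is open in k /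
    a convex cone / e^{ad x}-invariant / equal to k. *)
Definition quotient_no_open_inv_cones (br : g -> g -> g) (theta : g -> g)
  : Prop :=
  forall W : set g,
    open_inv_cone br (kpart theta) W ->
    (forall x z, W x -> lie_center br (kpart theta) z -> W (x + z)) ->
    W !=set0 -> W = kpart theta.

End Defs.

(* Main.v *)
Require Import Defs.
From mathcomp Require Import all_boot all_order all_algebra.
From mathcomp Require Import all_classical all_reals all_analysis.
From mathcomp.real_closed Require Import complex.
From mathcomp Require Import ring.
Import Order.TTheory GRing.Theory Num.Theory.
Local Open Scope ring_scope.
Local Open Scope classical_set_scope.

Lemma lim_near_eq (R : realType) (V : normedModType R) (f g : nat -> V) :
  (\forall n \near \oo, f n = g n) -> lim (f @ \oo) = lim (g @ \oo).
Proof.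
move=> fg; have -> : f @ \oo = g @ \oo; last by [].
apply/funext=> P; apply/propext; split.
- apply: (near_eq_cvg (f:=f) (g:=g)); by near=> n; rewrite (near fg n).
- apply: (near_eq_cvg (f:=g) (g:=f)); by near=> n; rewrite (near fg n).
Unshelve. all: by end_near.
Qed.

Lemma lim_ncvg (R : realType) (V : normedModType R) (f g : nat -> V) :
  ~ cvg (f @ \oo) -> ~ cvg (g @ \oo) -> lim (f @ \oo) = lim (g @ \oo).
Proof.
move=> nf ng; rewrite /lim /lim_in; congr get.
apply/funext=> l; apply/propext; split => H.
- by exfalso; apply: nf; apply: cvgP H.
- by exfalso; apply: ng; apply: cvgP H.
Qed.

Lemma series_cvg_Z (R : realType) (V : normedModType R) (c : nat -> R) (l : R) (v : V) :
  series c @ \oo --> l -> series (fun n => c n *: v) @ \oo --> l *: v.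
Proof.
move=> h.
have -> : series (fun n => c n *: v) = (fun N => series c N *: v).
  apply/funext=> N; rewrite /series /= scaler_suml //.
exact: cvgZr_tmp.
Qed.
Lemma ccss (R : comRingType) (n : nat) :
  let cc := fun n : nat => (~~ odd n)%:R * (-1 : R) ^+ n./2 in
  let ss := fun n : nat => (odd n)%:R * (-1 : R) ^+ n.-1./2 in
  cc n.+1 = - ss n /\ ss n.+1 = cc n.
Proof.
move=> cc ss; rewrite /cc /ss.
rewrite -(odd_double_half n); move: (n./2) => m; case: (odd n).
- rewrite /= !odd_double /= !mul1r !mul0r; split => //.
  by rewrite add0n doubleK exprS mulN1r.
- rewrite /= !add0n !odd_double /= !mul1r !mul0r oppr0; split => //.

Qed.

Lemma br_bounded (R : realType) (U : normedModType R) (f : U -> U -> U) :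
  (forall (a : R) x z, f (a *: x) z = a *: f x z) ->
  (forall (a : R) x z, f z (a *: x) = a *: f z x) ->
  continuous (fun p : U * U => f p.1 p.2) ->
  exists2 k, k > 0 & forall u v, `|f u v| <= k * `|u| * `|v|.
Proof.
move=> fZl fZr.
have f0r : forall u, f u 0 = 0 by move=> u; have := fZr 0 0 u; rewrite !scale0r.
have f0l : forall u, f 0 u = 0 by move=> u; have := fZl 0 0 u; rewrite !scale0r.
move=> /(_ 0); rewrite /continuous_at /= f0r => /(_ _ (nbhsx_ballx _ _ ltr01)).
move=> /nbhs_ballP [_ /posnumP[e] he]; exists ((2 / e%:num) ^+2) => // u v.
have [|un0] := real_le0P (normr_real u).
  by rewrite normr_le0 => /eqP->; rewrite f0l !normr0 mulr0 mul0r.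
have [|vn0] := real_le0P (normr_real v).
  by rewrite normr_le0 => /eqP->; rewrite f0r !normr0 mulr0.
rewrite -[`|u|]/((PosNum un0)%:num) -[`|v|]/((PosNum vn0)%:num).
set ku := 2 / e%:num * (PosNum un0)%:num.
set kv := 2 / e%:num * (PosNum vn0)%:num.
rewrite -[X in f X](@scalerKV _ _ ku) /ku // fZl normrZ.
rewrite gtr0_norm // -ler_pdivlMl //.
rewrite -[X in f _ X](@scalerKV _ _ kv) /kv // fZr normrZ.
rewrite gtr0_norm // -ler_pdivlMl //.
suff /he : ball 0 e%:num (ku^-1 *: u, kv^-1 *: v).
  rewrite -ball_normE /= distrC subr0 => /ltW /le_trans; apply.
  rewrite ler_pdivlMl 1?pmulr_lgt0// mulr1 ler_pdivlMl 1?pmulr_lgt0//.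
  by rewrite mulrA [ku * _]mulrAC expr2.
rewrite -ball_normE /= distrC subr0.
have -> : (ku^-1 *: u, kv^-1 *: v) =
    (e%:num / 2) *: ((PosNum un0)%:num ^-1 *: u, (PosNum vn0)%:num ^-1 *: v).
  by rewrite invfM [kv ^-1]invfM invf_div -[_ *: u]scalerA -[_ *: v]scalerA.
rewrite normrZ ger0_norm // -mulrA gtr_pMr // ltr_pdivrMl // mulr1.
by rewrite prod_normE/= !normrZ !normfV !normr_id !mulVf ?gt_eqF// maxxx ltr1n.
Qed.

Lemma iter_series_cvg (R : realType) (V : completeNormedModType R) (f : V -> V)
  (K : R) (y : V) :
  0 <= K -> (forall v, `|f v| <= K * `|v|) ->
  cvgn (series (fun n => (n`!%:R)^-1 *: iter n f y)).
Proof.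
move=> K0 hf; apply: normed_cvg.
have hit : forall n, `|iter n f y| <= K ^+ n * `|y|.
  elim=> [|n IH] /=; first by rewrite expr0 mul1r.
  apply: le_trans (hf _) _; rewrite exprS -mulrA; exact: ler_wpM2l.
have -> : [normed series (fun n => (n`!%:R)^-1 *: iter n f y)] =
   series (fun n => `|(n`!%:R)^-1 *: iter n f y|) by [].
apply: (@series_le_cvg R _ (fun n => exp_coeff K n * `|y|)).
- by move=> n; rewrite normr_ge0.
- by move=> n; rewrite mulr_ge0 // exp_coeff_ge0.
- move=> n /=; rewrite normrZ ger0_norm ?invr_ge0 // /exp_coeff /=.
  rewrite mulrAC mulrC; apply: ler_wpM2r => //; by rewrite invr_ge0.
- have -> : series (fun n => exp_coeff K n * `|y|) =
      series (exp_coeff K) \* (fun=> `|y|).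
    by apply/funext => N; rewrite /series /= mulr_suml.
  apply: is_cvgMr_tmp; exact: is_cvg_series_exp_coeff.
Qed.

Theorem proposition4p11 (R : realType) (g : completeNormedModType R)
  (br : g -> g -> g) (theta : g -> g) (d : g) (ip : g -> g -> R[i]) :
  hermitian_lie_alg br theta d ip ->
  quotient_no_open_inv_cones br theta ->
  forall W : set g, open_inv_cone_g br W -> W !=set0 ->
    exists z, W z /\ lie_center br (kpart theta) z.
Proof.
move=> [[[blin banti bjac bcont] [tlin tcont tinv tbr]] [dk dcen]
  [ipD ipZ ipd ipC [c [c' [c0 c'0 cpos]]]] skew centk] qnc W
  [_ [U [oU WU]] Wadd Wsc Winv] [w0 Ww0].
set k := kpart theta; set p := ppart theta.
have br0l : forall z, br 0 z = 0.
  move=> z; have := blin 1 0 0 z; rewrite !scale1r addr0.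
  by move/(congr1 (fun v => v - br 0 z)) => /=; rewrite subrr addrK => <-.
have brDl : forall x y z, br (x + y) z = br x z + br y z.
  by move=> x y z; have := blin 1 x y z; rewrite !scale1r.
have brZl : forall a x z, br (a *: x) z = a *: br x z.
  by move=> a x z; have := blin a x 0 z; rewrite !addr0 br0l addr0.
have brDr : forall x y z, br z (x + y) = br z x + br z y.
  by move=> x y z; rewrite banti brDl opprD -!banti.
have brZr : forall a x z, br z (a *: x) = a *: br z x.
  by move=> a x z; rewrite banti brZl -scalerN -banti.
have brNr : forall x z, br z (- x) = - br z x.
  by move=> x z; rewrite -scaleN1r brZr scaleN1r.
have brNl : forall x z, br (- x) z = - br x z.
  by move=> x z; rewrite -scaleN1r brZl scaleN1r.
have t0 : theta 0 = 0.
  have := tlin 1 0 0; rewrite !scale1r addr0.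
  by move/(congr1 (fun v => v - theta 0)) => /=; rewrite subrr addrK => <-.
have tD : forall x y, theta (x + y) = theta x + theta y.
  by move=> x y; have := tlin 1 x y; rewrite !scale1r.
have tZ : forall a x, theta (a *: x) = a *: theta x.
  by move=> a x; have := tlin a x 0; rewrite !addr0 t0 addr0.
have tN : forall x, theta (- x) = - theta x.
  by move=> x; rewrite -scaleN1r tZ scaleN1r.
set cen := lie_center br k.
have cenD : forall z1 z2, cen z1 -> cen z2 -> cen (z1 + z2).
  move=> z1 z2 [k1 c1] [k2 c2]; split; first by rewrite /k /kpart /= tD k1 k2.
  by move=> x kx; rewrite brDl c1 // c2 // addr0.
have cenN : forall z, cen z -> cen (- z).
  move=> z [k1 c1]; split; first by rewrite /k /kpart /= tN k1.
  by move=> x kx; rewrite brNl c1 // oppr0.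
have cen0 : cen 0.
  by split; [rewrite /k /kpart /= t0 | move=> x _; rewrite br0l].
have cenZ : forall a z, cen z -> cen (a *: z).
  move=> a z [k1 c1]; split; first by rewrite /k /kpart /= tZ k1.
  by move=> x kx; rewrite brZl c1 // scaler0.
have pD : forall u v, p u -> p v -> p (u + v).
  by move=> u v pu pv; rewrite /p /ppart /= tD pu pv opprD.
have pZ : forall a u, p u -> p (a *: u).
  by move=> a u pu; rewrite /p /ppart /= tZ pu scalerN.
have kD : forall u v, k u -> k v -> k (u + v).
  by move=> u v pu pv; rewrite /k /kpart /= tD pu pv.
have kZ : forall a u, k u -> k (a *: u).
  by move=> a u pu; rewrite /k /kpart /= tZ pu.
set J := br d.
have Jp : forall u, p u -> p (J u).
  by move=> u pu; rewrite /p /ppart /J /= tbr dk pu brNr.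
have Jk : forall x, k x -> J x = 0 by move=> x kx; exact: dcen.
have JJ : forall u, p u -> J (J u) = - u.
  move=> u pu; set v := J (J u) + u.
  have pJJ : p (J (J u)) := Jp _ (Jp _ pu).
  have pv : p v by exact: pD.
  have ipv : ip v v = 0.
    rewrite /v ipD //.
    rewrite /J ipd ?ipd //; last exact: (Jp _ pu).
    by rewrite mulrA -expr2 sqr_i mulN1r addNr.
  have [+ _] := cpos v pv; rewrite ipv lecR pmulr_rle0 // => hv.
  have : `|v| = 0 by apply/eqP; rewrite -sqrf_eq0 eq_le hv sqr_ge0.
  by move/normr0_eq0/eqP; rewrite /v addr_eq0 => /eqP.
pose cc := fun n : nat => (~~ odd n)%:R * (-1 : R) ^+ n./2.
pose ss := fun n : nat => (odd n)%:R * (-1 : R) ^+ n.-1./2.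
have iterJ : forall n u, p u -> iter n J u = cc n *: u + ss n *: J u.
  elim=> [|n IH] u pu.
    by rewrite /= /cc /ss /= mul1r expr0 scale1r mul0r scale0r addr0.
  have [h1 h2] : cc n.+1 = - ss n /\ ss n.+1 = cc n := ccss R n.
  rewrite iterS IH // /J brDr !brZr -/J JJ // h1 h2 scalerN scaleNr addrC.
  by [].
have iterZ : forall n (a : R) v, iter n (br (a *: d)) v = a ^+ n *: iter n J v.
  elim=> [|n IH] a v /=; first by rewrite expr0 scale1r.
  by rewrite IH brZl brZr scalerA exprS.
have two0 : (2%:R : R) != 0 by rewrite pnatr_eq0.
have decomp : forall y, exists yk yp, [/\ k yk, p yp & y = yk + yp].
  move=> y; exists (2%:R^-1 *: (y + theta y)), (2%:R^-1 *: (y - theta y)).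
  split.
  - by rewrite /k /kpart /= tZ tD tinv addrC.
  - by rewrite /p /ppart /= tZ tD tN tinv -scalerN opprB addrC.
  - rewrite -scalerDr addrACA subrr addr0 -mulr2n -(@scaler_nat R g) scalerA.
    by rewrite mulVf // scale1r.
pose t y := fun n : nat => (n`!%:R)^-1 *: iter n (br (pi *: d)) y.
have tp : forall u n, p u ->
    t u n = cos_coeff pi n *: u + sin_coeff pi n *: J u.
  move=> u n pu; rewrite /t iterZ iterJ // scalerDr !scalerA /=.
  rewrite scalerDr !scalerA /cc /ss /=; congr (_ *: _ + _ *: _).
  - by rewrite /cos_coeff /= -exprnP; ring.
  - by rewrite /sin_coeff /=; ring.
have expadE : forall yk yp, k yk -> p yp ->
    expad br (pi *: d) (yk + yp) = yk - yp.
  move=> yk yp kk pp.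
  have e1 : forall N, series (t (yk + yp)) N.+1 = yk + series (t yp) N.+1.
    move=> N; rewrite /series /= !big_nat_recl //.
    rewrite /t /= fact0 invr1 !scale1r addrA; congr (_ + _).
    apply: eq_bigr => i _; rewrite -!iterS !iterSr; congr (_ *: iter _ _ _).
    by rewrite brDr brZl -/J Jk // scaler0 add0r.
  have e2 : series (t yp) @ \oo --> cos pi *: yp + sin pi *: J yp.
    have -> : t yp = (fun n => cos_coeff pi n *: yp) + (fun n => sin_coeff pi n *: J yp).
      by apply/funext => n; rewrite tp.
    rewrite seriesD; apply: cvgD; apply: series_cvg_Z.
    - by rewrite unlock; exact: is_cvg_series_cos_coeff.
    - by rewrite unlock; exact: is_cvg_series_sin_coeff.
  rewrite /expad -/(t _).
  rewrite (@lim_near_eq R g _ (fun N => yk + series (t yp) N)).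
    rewrite (cvg_lim _ (cvgD (cvg_cst yk) e2)) //.
    by rewrite cospi sinpi scale0r addr0 scaleN1r.
  near=> N; have N0 : (0 < N)%N.
    near: N; exact: nbhs_infty_gt.
  by rewrite -(prednK N0); exact: e1.
  Unshelve. all: try by end_near.
have [K K0 hK] := @br_bounded R g br brZl brZr bcont.
have scvg : forall x y, cvgn (series (fun n => (n`!%:R)^-1 *: iter n (br x) y)).
  move=> x y; apply: (@iter_series_cvg R g _ (K * `|x|)).
    by rewrite mulr_ge0 // ltW.
  by move=> v; exact: hK.
have k0 : k 0 by rewrite /k /kpart /= t0.
have kiter : forall x y n, k x -> k y -> k (iter n (br x) y).
  move=> x y n kx ky; elim: n => [|n IH] //=.
  by rewrite /k /kpart /= tbr kx IH.
have kexpad : forall x y, k x -> k y -> k (expad br x y).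
  move=> x y kx ky; have hs := scvg x y.
  set s := series _ in hs.
  have hts : (theta \o s) @ \oo --> theta (lim (s @ \oo)).
    exact: (cvg_comp _ _ hs (tcont _)).
  have ets : theta \o s = s.
    apply/funext => N; rewrite /s /series /= (big_morph theta tD t0).
    by apply: eq_bigr => i _; rewrite tZ; congr (_ *: _); apply: kiter.
  rewrite ets in hts; rewrite /k /kpart /= /expad -/s.
  by rewrite -(cvg_lim _ hts).
have expadD : forall x y z, k x -> cen z -> expad br x (y + z) = expad br x y + z.
  move=> x y z kx [kz cz].
  pose t' v := fun n : nat => (n`!%:R)^-1 *: iter n (br x) v.
  have e1 : forall N, series (t' (y + z)) N.+1 = series (t' y) N.+1 + z.
    move=> N; rewrite /series /= !big_nat_recl //.
    rewrite /t' /= fact0 invr1 !scale1r addrAC; congr (_ + _ + _).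
    apply: eq_bigr => i _; rewrite -!iterS !iterSr; congr (_ *: iter _ _ _).
    by rewrite brDr [br x z]banti cz // oppr0 addr0.
  rewrite /expad -/(t' _) -/(t' _).
  rewrite (@lim_near_eq R g _ (fun N => series (t' y) N + z)).
    by rewrite (cvg_lim _ (cvgD (scvg x y) (cvg_cst z))).
  near=> N; have N0 : (0 < N)%N.
    near: N; exact: nbhs_infty_gt.
  by rewrite -(prednK N0); exact: e1.
  Unshelve. all: try by end_near.
have [yk [yp [kk pp w0E]]] := decomp w0.
have Wyk : W yk.
  have h := Winv (pi *: d) w0 I Ww0; rewrite w0E expadE // in h.
  have h2 := Wadd _ _ Ww0 h; rewrite w0E addrACA subrr addr0 in h2.
  have := Wsc (2%:R^-1) _ _ h2; rewrite invr_gt0 ltr0n => /(_ isT).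
  rewrite -mulr2n -(@scaler_nat R g) scalerA mulVf // scale1r.
  by [].
have oW : open W by rewrite WU setIT.
pose W' := [set x | k x /\ exists z, cen z /\ W (x + z)].
have hW' : W' = k.
  apply: qnc.
  - split.
    + by move=> x [].
    + exists [set x | exists z, cen z /\ W (x + z)]; split.
        have -> : [set x | exists z, cen z /\ W (x + z)] =
            \bigcup_(z in cen) ((fun x => x + z) @^-1` W).
          apply/seteqP; split => x /=.
            by move=> [z [cz Wz]]; exists z.
          by move=> [z cz Wz]; exists z.
        apply: bigcup_open => z _; apply: open_comp => // x _.
        by apply: continuousD; [exact: cvg_id | exact: cvg_cst].
      apply/seteqP; split => x /=.
        by move=> [kx h]; split.
      by move=> [h kx]; split.
    + move=> x y [kx [z1 [c1 W1]]] [ky [z2 [c2 W2]]]; split; first exact: kD.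
      exists (z1 + z2); split; first exact: cenD.
      by rewrite addrACA; exact: Wadd.
    + move=> t' x tp0 [kx [z [cz Wz]]]; split; first exact: kZ.
      exists (t' *: z); split; first exact: cenZ.
      by rewrite -scalerDr; exact: Wsc.
    + move=> x y kx [ky [z [cz Wz]]]; split; first exact: kexpad.
      exists z; split => //; rewrite -expadD //; exact: Winv.
  - move=> x z [kx [z0 [c0' W0]]] cz; split; first by apply: kD => //; case: cz.
    exists (z0 - z); split; first by apply: cenD => //; exact: cenN.
    by rewrite addrACA subrr addr0.
  - by exists yk; split => //; exists 0; split; [exact: cen0 | rewrite addr0].
have : W' 0 by rewrite hW'.
by move=> [_ [z [cz Wz]]]; exists z; rewrite add0r in Wz.
Qed.
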